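(* Let $N$ be a positive integer and let $\lambda=(\lambda_1,\dots,\lambda_t)\in\overline{\mathcal{U}}_N$ with $\lambda_t$ odd. Then for every integer $x$ with $1\le x\le\lambda_t$, $$x\in\lambda\iff \lambda_t-x\notin\lambda.$$
   Context: A partition of $N$ into distinct parts is a sequence $\lambda=(\lambda_1<\dots<\lambda_t)$ of positive integers with sum $N$ and $t\ge 2$, identified with its set of parts. Missing parts: $\mathcal{M}_\lambda=\{1,\dots,\lambda_t\}\setminus\lambda$. $\lambda$ is refinable if there are two distinct missing parts $\mu<\mu'$ with $\mu+\mu'\in\lambda$, unrefinable otherwise; $\mathcal{U}_N$ is the set of unrefinable partitions of $N$. An element of $\mathcal{U}_N$ is maximal if its largest part is the maximum of the largest parts of elements of $\mathcal{U}_N$; $\widetilde{\mathcal{U}}_N$ is the set of these and $\overline{\mathcal{U}}_N=\{\lambda\in\widetilde{\mathcal{U}}_N:\#\mathcal{M}_\lambda=\lfloor\lambda_t/2\rfloor\}$. *)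

(* Defs.v *)
From mathcomp Require Import all_boot.
Set Implicit Arguments. Unset Strict Implicit. Unset Printing Implicit Defensive.

Definition is_dpart (N : nat) (l : seq nat) : bool :=
  [&& sorted ltn l, all (fun x => 0 < x) l, sumn l == N & 1 < size l].

Definition lmax (l : seq nat) : nat := last 0 l.

Definition missing (l : seq nat) : seq nat :=
  [seq x <- iota 1 (lmax l) | x \notin l].

Definition refinable (l : seq nat) : bool :=
  has (fun m => has (fun m' => (m < m') && (m + m' \in l)) (missing l)) (missing l).

Definition unrefinable (N : nat) (l : seq nat) : bool :=
  is_dpart N l && ~~ refinable l.

Definition maximal_unref (N : nat) (l : seq nat) : Prop :=
  unrefinable N l /\ forall m, unrefinable N m -> lmax m <= lmax l.

Definition in_Ubar (N : nat) (l : seq nat) : Prop :=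
  maximal_unref N l /\ size (missing l) = (lmax l)./2.

(* Main.v *)
Require Import Defs.
From mathcomp Require Import all_boot.
From mathcomp Require Import zify.

Lemma refin_of (l : seq nat) y z : y \in missing l -> z \in missing l -> y != z ->
  y + z \in l -> refinable l.
Proof.
move=> hy hz ne hs; rewrite /refinable.
case: (ltngtP y z) => c; last by rewrite c eqxx in ne.
- apply/hasP; exists y => //; apply/hasP; exists z => //; by rewrite c hs.
- apply/hasP; exists z => //; apply/hasP; exists y => //; by rewrite c addnC hs.
Qed.

Theorem lemma4p1 (N : nat) (l : seq nat) :
  0 < N -> in_Ubar N l -> odd (lmax l) ->
  forall x : nat, 1 <= x <= lmax l ->
    (x \in l) <-> (lmax l - x \notin l).
Proof.
move=> _ [[/andP [/and4P [srt pos _ sz] nref] _] hsz] hodd x hx.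
have LL : lmax l \in l.
  rewrite /lmax; case: (l) sz => [|a s] //= _.
  by rewrite mem_last.
set L := lmax l in hsz hodd hx LL *.
have pos0 : 0 \notin l.
  by apply/negP => h; move/allP: pos => /(_ _ h).
have memM y : (y \in missing l) = (1 <= y <= L) && (y \notin l).
  by rewrite /missing mem_filter mem_iota andbC; congr (_ && _); lia.
have noboth y : 1 <= y < L -> y \notin l -> L - y \notin l -> False.
  move=> hy n1 n2; move/negP: nref; apply; apply: (@refin_of _ y (L - y)).
  - by rewrite memM n1; lia.
  - by rewrite memM n2; lia.
  - apply/negP => /eqP e; move: hodd; have -> : L = y.*2 by lia.
    by rewrite odd_double.
  - by rewrite subnKC ?LL //; lia.
have xL : x = L \/ x < L by lia.
case: xL => [-> | xlt].
  by rewrite subnn pos0 LL.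
split; last first.
  by move=> h; apply/negPn/negP => h'; apply: (noboth x) => //; lia.
move=> hxl; apply/negP => hLx.
pose S := iota 1 L.-1.
pose P := fun y => y \notin l.
have e1 : size (missing l) = count P S.
  rewrite /missing size_filter -/L.
  have -> : iota 1 L = iota 1 L.-1 ++ [:: L].
    have {1}-> : L = L.-1 + 1 by lia.
    by rewrite iotaD /=; congr (_ ++ [:: _]); lia.
  rewrite count_cat /= -/S /P.
  rewrite LL /=; lia.
pose f := fun y => L - y.
have pm : perm_eq (map f S) S.
  apply: uniq_perm.
  - rewrite map_inj_in_uniq ?iota_uniq //.
    by move=> a b; rewrite !mem_iota /f => ha hb e; lia.
  - exact: iota_uniq.
  move=> y; apply/mapP/idP.
  + by case=> z; rewrite !mem_iota /f => hz ->; lia.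
  + rewrite mem_iota => hy; exists (L - y); rewrite ?mem_iota /f; lia.
have e2 : count (preim f P) S = count P S.
  by rewrite -count_map (permP pm).
have e3 : count (predI P (preim f P)) S = 0.
  apply/eqP; rewrite -leqn0 leqNgt -has_count; apply/hasP => [[y]].
  rewrite mem_iota /= /P /f => hy /andP [n1 n2]; apply: (noboth y) => //; lia.
have e4 : count (predU P (preim f P)) S < size S.
  rewrite -(count_predC (predU P (preim f P))) -addn1 leq_add2l.
  rewrite -has_count; apply/hasP; exists x; first by rewrite mem_iota; lia.
  by rewrite /= /P /f hxl hLx.
move: (count_predUI P (preim f P) S); rewrite e2 e3 addn0 -e1 hsz.
move: e4; rewrite size_iota.
have : L = (L./2).*2.+1 by rewrite -[L in L = _]odd_double_half hodd.
lia.
Qed.
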